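(* Let $a$ be a smooth, positive, increasing function on $(0,\infty)$ and consider the two-dimensional Robertson–Walker spacetime $ds^2=-dt^2+a^2(t)\,d\chi^2$, with comoving worldlines $\beta_0:\chi=0$, $\beta_1:\chi=\chi_1$, $\beta_2:\chi=\chi_2$. Suppose the events $\beta_0(t_0)$, $\beta_1(t_1)$, $\beta_2(t_2)$ lie on one null geodesic in the past-pointing horismos (past light cone) of $\beta_0(t_0)$. Let the optical coordinates of $\beta_1(t_1)$ and $\beta_2(t_2)$ relative to $\beta_0$ be $(t_0,\delta_1)$ and $(t_0,\delta_2)$, with $\delta_2>\delta_1>0$, and let $\delta_{21}$ be the affine distance coordinate of $\beta_2(t_2)$ in the optical coordinates of $\beta_1$. Then $$\delta_2=\delta_1+\frac{a(t_1)}{a(t_0)}\,\delta_{21}.$$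
   Context: Comoving worldlines $\chi=\text{const}$ are parametrized by $t$, their proper time. Optical coordinates $(\textsc{t},\delta)$ relative to a comoving observer $\beta_j$ ($\chi=\chi_j$): an event $(t,\chi)$ has $\textsc{t}$ equal to the proper time of $\beta_j$ at which the event lies on $\beta_j$'s past light cone, i.e. $\int_t^{\textsc{t}}du/a(u)=|\chi-\chi_j|$, and affine distance $\delta=\mathrm{sgn}(\chi-\chi_j)\int_t^{\textsc{t}}\frac{a(u)}{a(\textsc{t})}\,du$. *)

(* Defs.v *)
From Stdlib Require Import Reals.
From Coquelicot Require Import Coquelicot.
Open Scope R_scope.

Definition sgn (x : R) : R :=
  if Rlt_dec 0 x then 1 else if Rlt_dec x 0 then -1 else 0.

Definition smooth_pos (a : R -> R) : Prop :=
  forall (n : nat) (x : R), 0 < x -> ex_derive (Derive_n a n) x.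

(* Optical coordinates (T, delta) of the event (t, chi) relative to the
   comoving observer chi = chij:  t <= T, int_t^T du/a(u) = |chi - chij|,
   delta = sgn(chi - chij) * int_t^T a(u)/a(T) du. *)
Definition optical_coords (a : R -> R) (chij t chi T delta : R) : Prop :=
  0 < t /\ t <= T /\
  RInt (fun u => / a u) t T = Rabs (chi - chij) /\
  delta = sgn (chi - chij) * RInt (fun u => a u / a T) t T.

Definition on_past_null_geodesic (a : R -> R) (t0 : R) (evs : list (R * R)) : Prop :=
  exists s : R, (s = 1 \/ s = -1) /\
    forall e, List.In e evs ->
      0 < fst e /\ fst e <= t0 /\ snd e = s * RInt (fun u => / a u) (fst e) t0.

(* Main.v *)
Require Import Defs.
From Stdlib Require Import Reals Lra.
From Coquelicot Require Import Coquelicot.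
Open Scope R_scope.

Lemma exR (f : R -> R) x y : (forall z, 0 < z -> continuous f z) -> 0 < x -> 0 < y ->
  ex_RInt f x y.
Proof.
  intros Hc Hx Hy. apply (@ex_RInt_continuous R_CompleteNormedModule). intros z Hz. apply Hc.
  assert (0 < Rmin x y) by (apply Rmin_glb_lt; lra). lra.
Qed.

Lemma posR (f : R -> R) x y : (forall z, 0 < z -> continuous f z) ->
  (forall z, 0 < z -> 0 < f z) -> 0 < x -> x < y -> 0 < RInt f x y.
Proof.
  intros Hc Hp Hx Hxy. apply RInt_gt_0; auto.
  - intros z Hz; apply Hp; lra.
  - intros z Hz; apply Hc; lra.
Qed.

Lemma chas (f : R -> R) x y z : (forall z, 0 < z -> continuous f z) -> 0 < x -> 0 < y -> 0 < z ->
  RInt f x z = RInt f x y + RInt f y z.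
Proof.
  intros Hc Hx Hy Hz. rewrite <- (@RInt_Chasles R_CompleteNormedModule f x y z); try apply exR; auto.
Qed.

Lemma sgn1 x : 0 < x -> sgn x = 1.
Proof. intros; unfold sgn; destruct (Rlt_dec 0 x); lra. Qed.

Theorem lemma1 (a : R -> R)
  (Ha_smooth : smooth_pos a)
  (Ha_pos : forall x, 0 < x -> 0 < a x)
  (Ha_incr : forall x y, 0 < x -> x < y -> a x < a y)
  (chi1 chi2 t0 t1 t2 delta1 delta2 T21 delta21 : R)
  (Ht0 : 0 < t0)
  (Hnull : on_past_null_geodesic a t0 ((t0, 0) :: (t1, chi1) :: (t2, chi2) :: nil))
  (Hopt1 : optical_coords a 0 t1 chi1 t0 delta1)
  (Hopt2 : optical_coords a 0 t2 chi2 t0 delta2)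
  (Hd : 0 < delta1 < delta2)
  (Hopt21 : optical_coords a chi1 t2 chi2 T21 delta21) :
  delta2 = delta1 + a t1 / a t0 * delta21.
Proof.
  assert (Hda : forall x, 0 < x -> ex_derive a x) by (intros x Hx; exact (Ha_smooth 0%nat x Hx)).
  assert (Hci : forall z, 0 < z -> continuous (fun u => / a u) z).
  { intros z Hz. apply (@ex_derive_continuous R_AbsRing R_NormedModule), ex_derive_inv; auto. specialize (Ha_pos z Hz); lra. }
  assert (Hcc : forall c, forall z, 0 < z -> continuous (fun u => a u / c) z).
  { intros c z Hz. apply (@ex_derive_continuous R_AbsRing R_NormedModule). unfold Rdiv.
    apply ex_derive_mult; auto. apply ex_derive_const. }
  assert (Hpi : forall z, 0 < z -> 0 < / a z) by (intros z Hz; apply Rinv_0_lt_compat; auto).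
  assert (Hpc : forall c, 0 < c -> forall z, 0 < z -> 0 < a z / c)
    by (intros c Hc z Hz; apply Rdiv_lt_0_compat; auto).
  destruct Hopt1 as [Ht1 [Ht10 [HI1 Hd1]]].
  destruct Hopt2 as [Ht2 [Ht20 [HI2 Hd2]]].
  destruct Hopt21 as [_ [Ht2T [HI21 Hd21]]].
  destruct Hnull as [s [Hs Hev]].
  assert (E1 := Hev (t1, chi1) ltac:(simpl; auto)).
  assert (E2 := Hev (t2, chi2) ltac:(simpl; auto)).
  simpl in E1, E2. destruct E1 as [_ [_ Ec1]]; destruct E2 as [_ [_ Ec2]].
  rewrite Rminus_0_r in *.
  pose proof (Ha_pos t0 Ht0) as Ha0.
  assert (Ht21 : t2 < t1).
  { destruct (Rlt_le_dec t2 t1) as [h|h]; auto. exfalso.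
    destruct (Rle_lt_or_eq_dec _ _ h) as [h'|h'].
    - rewrite (chas (fun u : R => a u / a t0) t1 t2 t0 (Hcc (a t0))) in Hd1; auto; try lra.
      pose proof (posR (fun u : R => a u / a t0) t1 t2 (Hcc (a t0)) (Hpc _ Ha0) Ht1 h').
      assert (chi1 <> 0) by (intro e; rewrite e in Hd1; unfold sgn in Hd1;
        destruct (Rlt_dec 0 0); destruct (Rlt_dec 0 0); lra).
      assert (0 <= RInt (fun u => / a u) t2 t0).
      { destruct (Rle_lt_or_eq_dec _ _ Ht20) as [q|q]. left; apply posR; auto. subst; rewrite RInt_point; unfold zero; simpl; lra. }
      assert (0 < RInt (fun u => / a u) t1 t2) by (apply posR; auto).
      rewrite (chas (fun u : R => / a u) t1 t2 t0 Hci) in Ec1; auto; try lra.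
      destruct Hs as [-> | ->].
      + rewrite sgn1 in Hd1 by lra.
        destruct (Rle_lt_or_eq_dec _ _ H1) as [q|q].
        * rewrite sgn1 in Hd2 by lra. lra.
        * rewrite <- q, Rmult_0_r in Ec2. rewrite Ec2 in Hd2. unfold sgn in Hd2.
          destruct (Rlt_dec 0 0); destruct (Rlt_dec 0 0); lra.
      + assert (sgn chi1 = -1) by (unfold sgn; destruct (Rlt_dec 0 chi1); destruct (Rlt_dec chi1 0); lra).
        assert (0 <= RInt (fun u : R => a u / a t0) t2 t0).
        { destruct (Rle_lt_or_eq_dec _ _ Ht20) as [q|q]. left; apply posR; auto. subst; rewrite RInt_point; unfold zero; simpl; lra. }
        assert (0 <= RInt (fun u : R => a u / a t0) t1 t2 + RInt (fun u : R => a u / a t0) t2 t0) by lra.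
        rewrite H3 in Hd1. nra.
    - subst. lra. }
  assert (Hs1 : s = 1).
  { destruct Hs as [|Hs]; auto. exfalso.
    destruct (Rle_lt_or_eq_dec _ _ Ht10) as [q|q].
    - pose proof (posR (fun u : R => / a u) t1 t0 Hci Hpi Ht1 q).
      assert (sgn chi1 = -1) by (unfold sgn; destruct (Rlt_dec 0 chi1); destruct (Rlt_dec chi1 0); nra).
      pose proof (posR (fun u : R => a u / a t0) t1 t0 (Hcc _) (Hpc _ Ha0) Ht1 q). nra.
    - subst t1. rewrite RInt_point in Hd1. unfold zero in Hd1; simpl in Hd1. lra. }
  subst s.
  assert (Hdiff : chi2 - chi1 = RInt (fun u => / a u) t2 t1).
  { rewrite Ec1, Ec2, (chas (fun u : R => / a u) t2 t1 t0 Hci); auto; lra. }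
  pose proof (posR (fun u : R => / a u) t2 t1 Hci Hpi Ht2 Ht21) as Hp21.
  rewrite Hdiff, Rabs_pos_eq in HI21 by lra.
  rewrite Hdiff, sgn1, Rmult_1_l in Hd21 by lra.
  assert (HT : T21 = t1).
  { destruct (Rtotal_order T21 t1) as [h|[h|h]]; auto; exfalso.
    - rewrite (chas (fun u : R => / a u) t2 T21 t1 Hci) in HI21; try lra.
      pose proof (posR (fun u : R => / a u) T21 t1 Hci Hpi ltac:(lra) h). lra.
    - rewrite (chas (fun u : R => / a u) t2 t1 T21 Hci) in HI21; try lra.
      pose proof (posR (fun u : R => / a u) t1 T21 Hci Hpi ltac:(lra) h). lra. }
  subst T21.
  assert (Hc1 : 0 < chi1).
  { destruct (Rle_lt_or_eq_dec _ _ Ht10) as [q|q].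
    - pose proof (posR (fun u : R => / a u) t1 t0 Hci Hpi Ht1 q). lra.
    - subst t1. rewrite RInt_point in Hd1. unfold zero in Hd1; simpl in Hd1. lra. }
  rewrite Hd2, Hd1. rewrite !sgn1 by lra.
  rewrite (chas (fun u : R => a u / a t0) t2 t1 t0 (Hcc _)); auto; try lra.
  rewrite Hd21.
  pose proof (Ha_pos t1 Ht1) as Ha1.
  assert (RInt (fun u => a u / a t0) t2 t1 = RInt (fun u => scal (a t1 / a t0) (a u / a t1)) t2 t1).
  { apply RInt_ext. intros x _. unfold scal; simpl; unfold mult; simpl. field; lra. }
  rewrite H, (@RInt_scal R_CompleteNormedModule) by (apply exR; auto; lra).
  unfold scal; simpl; unfold mult; simpl. ring.
Qed.
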